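(* Let $\mathcal D\subset\mathbb R^d$ be a bounded domain, $p>0$, and $\rho:\mathcal D\times\Omega\to[0,\infty)$ a non-negative (error density) random field. Fix $C\in(0,1)$, $\mathrm{TOL}_0>0$, $\theta\in(0,1)$, $C_\xi>0$, set $\mathrm{TOL}_\ell=C^\ell\mathrm{TOL}_0$, and assume the work and bias models described in the context. Assume the sampling error control satisfies either (i) (fully adaptive case) $\|\rho\|_{L^{d/(p+d)}_{\mathbb P}(\mathcal D\times\Omega)}<\infty$ and the level-$\ell$ mesh is $h_\ell(x;\omega)=\mathrm{TOL}_\ell^{1/p}\big(\int_{\mathcal D}\mathbb E[\rho^{\frac d{p+d}}]\big)^{-1/p}\rho(x;\omega)^{-\frac1{p+d}}$, so that $\int_{\mathcal D}\rho h_\ell^p\,dx=\mathrm{TOL}_\ell\int_{\mathcal D}\rho^{\frac d{p+d}}dx\big/\int_{\mathcal D}\mathbb E[\rho^{\frac d{p+d}}]$ for each sample; or (ii) (adaptive selection of uniform meshes) $\big\|\|\rho\|_{L^1(\mathcal D)}\big\|_{L^{d/(p+d)}_{\mathbb P}(\Omega)}<\infty$ and the level-$\ell$ mesh is the constant $h_\ell(\omega)=\mathrm{TOL}_\ell^{1/p}\big(\int_{\mathcal D}\rho(x;\omega)dx\big)^{-\frac1{p+d}}\big/\mathbb E\big[(\int_{\mathcal D}\rho)^{\frac d{p+d}}\big]^{1/p}$, so that $h_\ell^p\int_{\mathcal D}\rho\,dx=\mathrm{TOL}_\ell(\int_{\mathcal D}\rho)^{\frac d{p+d}}/\mathbb E[(\int_{\mathcal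 D}\rho)^{\frac d{p+d}}]$ for each sample. Then the MLMC work $W_{\mathrm{MLMC}}(\mathrm{TOL})$ defined in the context, with real-valued $L$ implied by the bias constraint, satisfies, as $\mathrm{TOL}\to0$ (with $C,\mathrm{TOL}_0,\theta,C_\xi$ fixed), $$W_{\mathrm{MLMC}}\simeq\begin{cases}K\,\mathrm{TOL}^{-2},& d<2p,\\ K\,\mathrm{TOL}^{-2}(\log\mathrm{TOL}^{-1})^2,& d=2p,\\ K\,\mathrm{TOL}^{-d/p},& d>2p,\end{cases}$$ (i.e. the ratio of the two sides tends to $1$), where $K=K_3K_4K_5$ with $K_3=\mathbb E[K_2]\mathrm{Var}[K_1]$, which equals $\|\rho\|^{d/p}_{L^{d/(p+d)}_{\mathbb P}(\mathcal D\times\Omega)}\big(c_V(\|\rho\|_{L^{d/(p+d)}(\mathcal D)}^{d/(p+d)})\big)^2$ in case (i) and $|\mathcal D|\,\big\|\|\rho\|_{L^1(\mathcal D)}\big\|^{d/p}_{L^{d/(p+d)}_{\mathbb P}(\Omega)}\big(c_V(\|\rho\|_{L^1(\mathcal D)}^{d/(p+d)})\big)^2$ in case (ii); $$K_4=\begin{cases}\mathrm{TOL}_0^{-d/p}\left(\sqrt{\frac{V_0}{\mathrm{Var}[K_1]}}\frac{1}{(C^{-1}-1)\sqrt{1+C^{d/p}}}+\mathrm{TOL}_0\frac{C^{1-\frac d{2p}}}{1-C^{1-\frac d{2p}}}\right)^2,& d<2p,\\ (\log C)^{-2},& d=2p,\\ (1-\theta)^{2-\frac dp}\big(1-C^{\frac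 d{2p}-1}\big)^{-2},& d>2p;\end{cases}$$ and $K_5=\left(\frac{C_\xi}{\theta}\right)^2(C^{-1}-1)^2(1+C^{d/p})$.
   Context: Norms: for $q=\frac d{p+d}\in(0,1)$, $\|g\|_{L^q_{\mathbb P}(\mathcal D\times\Omega)}=\big(\int_{\mathcal D}\mathbb E[|g|^q]\big)^{1/q}$ (a quasi-norm), similarly on $\mathcal D$ or $\Omega$ alone; $|\mathcal D|=\int_{\mathcal D}1\,dx$; $c_V(Y)=\sqrt{\mathrm{Var}[Y]}/\mathbb E[Y]$ is the coefficient of variation. In both cases the meshes have the form $h_\ell(x;\omega)=\mathrm{TOL}_\ell^{1/p}f(x;\omega)$ with $f$ independent of $\ell$; define $K_1(\omega)=\int_{\mathcal D}\rho f^p\,dx$ and $K_2(\omega)=\int_{\mathcal D}f^{-d}\,dx$. Work model: the expected work of one sample computed with mesh size function $h$ is $\int_{\mathcal D}\mathbb E[h^{-d}]$. Bias model: the error of the output computed on mesh $h$ is $\int_{\mathcal D}\rho h^p$, so level differences are modeled by $Q_\ell-Q_{\ell-1}\simeq\int_{\mathcal D}\rho(h_{\ell-1}^p-h_\ell^p)dx$. Accordingly the level variances and works are $V_0>0$ a constant (the variance of the level-$0$ output), $W_0=\int_{\mathcal D}\mathbb E[h_0^{-d}]=\mathrm{TOL}_0^{-d/p}\mathbb E[K_2]$, and for $\ell\ge1$: $V_\ell=\mathrm{TOL}_\ell^2(C^{-1}-1)^2\mathrm{Var}[K_1]$, $W_\ell=\int_{\mathcal D}\mathbb E[h_\ell^{-d}]+\int_{\mathcal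 D}\mathbb E[h_{\ell-1}^{-d}]=\mathrm{TOL}_\ell^{-d/p}(1+C^{d/p})\mathbb E[K_2]$. MLMC work: $W_{\mathrm{MLMC}}=\sum_{\ell=0}^L M_\ell W_\ell$ with real (non-rounded) optimal sample sizes $M_\ell=(C_\xi/(\theta\mathrm{TOL}))^2\sqrt{V_\ell/W_\ell}\sum_{m=0}^L\sqrt{W_mV_m}$, so that $W_{\mathrm{MLMC}}=(C_\xi/(\theta\mathrm{TOL}))^2\big(\sum_{\ell=0}^L\sqrt{W_\ell V_\ell}\big)^2$. The number of levels $L\in\mathbb R^+$ is implied by the bias constraint $\mathrm{TOL}_L=C^L\mathrm{TOL}_0=(1-\theta)\mathrm{TOL}$, i.e. $L=\log_C\big((1-\theta)\mathrm{TOL}/\mathrm{TOL}_0\big)$ (assuming $\mathrm{TOL}_0>(1-\theta)\mathrm{TOL}$); for non-integer $L$ the geometric sum $\sum_{\ell=1}^L C^{(1-\frac d{2p})\ell}$ is interpreted as $C^{1-\frac d{2p}}\frac{1-C^{(1-\frac d{2p})L}}{1-C^{1-\frac d{2p}}}$ when $d\ne2p$ and as $L$ when $d=2p$. *)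

(* Defs.v *)
From HB Require Import structures.
From mathcomp Require Import all_boot all_order all_algebra.
From mathcomp Require Import all_classical all_reals all_analysis.
Set Implicit Arguments. Unset Strict Implicit. Unset Printing Implicit Defensive.
Import Order.TTheory GRing.Theory Num.Theory.
Import numFieldNormedType.Exports.
Local Open Scope classical_set_scope.
Local Open Scope ring_scope.

Section Prob.
Context {R : realType} {dT : measure_display} {T : measurableType dT}.
Variable P : probability T R.

Definition Ee (Y : T -> \bar R) : \bar R := (\int[P]_w Y w)%E.
Definition Vare (Y : T -> \bar R) : \bar R :=
  (\int[P]_w ((Y w - Ee Y) ^+ 2))%E.
Definition coef_var (Y : T -> \bar R) : R :=
  Num.sqrt (fine (Vare Y)) / fine (Ee Y).
End Prob.

Section Field.
Context {R : realType} {dX : measure_display} {X : measurableType dX}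
        {dT : measure_display} {T : measurableType dT}.
Variables (mu : {measure set X -> \bar R}) (D : set X) (P : probability T R).

Definition qexp (d : nat) (p : R) : R := d%:R / (p + d%:R).

Definition LqP_norm (g : X -> T -> R) (q : R) : \bar R :=
  poweR (\int[mu]_(x in D) \int[P]_w ((`|g x w| `^ q)%:E))%E q^-1.

Definition LqD_norm (g : X -> T -> R) (q : R) (w : T) : \bar R :=
  poweR (\int[mu]_(x in D) ((`|g x w| `^ q)%:E))%E q^-1.

Definition L1D_norm (g : X -> T -> R) (w : T) : \bar R :=
  (\int[mu]_(x in D) (`|g x w|%:E))%E.

Definition LqO_norm (Y : T -> \bar R) (q : R) : \bar R :=
  poweR (\int[P]_w poweR (`|Y w|)%E q)%E q^-1.

(* Case (i), fully adaptive meshes: h_l = TOL_l^(1/p) * f_full, with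
   f_full(x;w) = (int_D E[rho^q])^(-1/p) * rho(x;w)^(-1/(p+d)).        *)
Definition f_full (rho : X -> T -> R) (d : nat) (p : R) (x : X) (w : T) : R :=
  (fine (\int[mu]_(x in D) \int[P]_w ((rho x w `^ qexp d p)%:E))%E) `^ (- p^-1)
  * rho x w `^ (- (p + d%:R)^-1).

(* Case (ii), adaptively chosen uniform meshes: h_l = TOL_l^(1/p) * f_unif,
   f_unif(w) = (int_D rho(.;w))^(-1/(p+d)) / E[(int_D rho)^q]^(1/p).  *)
Definition f_unif (rho : X -> T -> R) (d : nat) (p : R) (x : X) (w : T) : R :=
  (fine (\int[mu]_(x in D) (rho x w)%:E)%E) `^ (- (p + d%:R)^-1)
  / (fine (\int[P]_w poweR (\int[mu]_(x in D) (rho x w)%:E) (qexp d p))%E)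
      `^ (p^-1).

Definition mesh (p C TOL0 : R) (l : nat) (f : X -> T -> R) (x : X) (w : T) : R :=
  (C ^+ l * TOL0) `^ (p^-1) * f x w.

Definition K1 (rho f : X -> T -> R) (p : R) (w : T) : \bar R :=
  (\int[mu]_(x in D) ((rho x w * f x w `^ p)%:E))%E.
Definition K2 (f : X -> T -> R) (d : nat) (w : T) : \bar R :=
  (\int[mu]_(x in D) ((f x w `^ (- d%:R))%:E))%E.
End Field.

(*  E2 = E[K_2], VK1 = Var[K_1], V0 = Vare of level-0 output.      *)
Section MLMC.
Context {R : realType}.
Variables (d : nat) (p C TOL0 theta Cxi V0 E2 VK1 : R).

Definition dp : R := d%:R / p.

Definition TOLl (l : nat) : R := C ^+ l * TOL0.
Definition Vlev (l : nat) : R :=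
  if l == 0%N then V0 else TOLl l ^+ 2 * (C^-1 - 1) ^+ 2 * VK1.
Definition Wlev (l : nat) : R :=
  if l == 0%N then TOL0 `^ (- dp) * E2
  else TOLl l `^ (- dp) * (1 + C `^ dp) * E2.

(* real number of levels implied by TOL_L = (1 - theta) TOL *)
Definition Lreal (TOL : R) : R := ln ((1 - theta) * TOL / TOL0) / ln C.

Definition sexp : R := 1 - d%:R / (2 * p).

(* sum_{l=1}^L C^(s l), extended to real L as in the context *)
Definition geom_sum (L : R) : R :=
  if d%:R == 2 * p then L
  else C `^ sexp * (1 - C `^ (sexp * L)) / (1 - C `^ sexp).

(* sum_{l=1}^L sqrt(W_l V_l): since sqrt(W_l V_l) = sqrt(W_1 V_1) C^(s(l-1)),
   this is sqrt(W_1 V_1) C^(-s) sum_{l=1}^L C^(s l).                   *)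
Definition sum_sqrtWV (L : R) : R :=
  Num.sqrt (Wlev 1 * Vlev 1) * C `^ (- sexp) * geom_sum L.

Definition W_MLMC (TOL : R) : R :=
  (Cxi / (theta * TOL)) ^+ 2
  * (Num.sqrt (Wlev 0 * Vlev 0) + sum_sqrtWV (Lreal TOL)) ^+ 2.

Definition K3 : R := E2 * VK1.
Definition K4 : R :=
  if d%:R < 2 * p then
    TOL0 `^ (- dp) *
    (Num.sqrt (V0 / VK1) / ((C^-1 - 1) * Num.sqrt (1 + C `^ dp))
     + TOL0 * C `^ sexp / (1 - C `^ sexp)) ^+ 2
  else if d%:R == 2 * p then (ln C) ^- 2
  else (1 - theta) `^ (2 - dp) * (1 - C `^ (d%:R / (2 * p) - 1)) ^- 2.
Definition K5 : R := (Cxi / theta) ^+ 2 * (C^-1 - 1) ^+ 2 * (1 + C `^ dp).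
Definition Kconst : R := K3 * K4 * K5.

Definition rate (TOL : R) : R :=
  if d%:R < 2 * p then TOL ^- 2
  else if d%:R == 2 * p then TOL ^- 2 * (ln TOL^-1) ^+ 2
  else TOL `^ (- dp).

Definition mlmc_asymptotics : Prop :=
  (fun TOL => W_MLMC TOL / (Kconst * rate TOL)) @ 0^'+ --> (1 : R).
End MLMC.

(* Main.v *)
Require Import Defs.
From HB Require Import structures.
From mathcomp Require Import all_boot all_order all_algebra.
From mathcomp Require Import all_classical all_reals all_analysis.
Import Order.TTheory GRing.Theory Num.Theory.
Import numFieldNormedType.Exports.
Local Open Scope classical_set_scope.
Local Open Scope ring_scope.
From mathcomp Require Import measurable_realfun.
From mathcomp Require Import ring.

Lemma ratio_cvg (R : realType) (f phi : R -> R) (al be ga : R) :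
  ga != 0 -> ga = al ^+ 2 -> phi @ 0^'+ --> (0 : R) ->
  (\forall t \near 0^'+, f t = (al + be * phi t) ^+ 2 / ga) ->
  f @ 0^'+ --> (1 : R).
Proof.
move=> ga0 gaE phi0 fE.
have h1 : (fun t => al + be * phi t) @ 0^'+ --> al + be * 0.
  apply: cvgD; first exact: cvg_cst.
  by apply: cvgM => //; exact: cvg_cst.
have h2 : (fun t => (al + be * phi t) * (al + be * phi t) * ga^-1) @ 0^'+ -->
   (al + be * 0) * (al + be * 0) * ga^-1.
  by apply: cvgM; [apply: cvgM|exact: cvg_cst].
rewrite mulr0 addr0 -expr2 -gaE divff // in h2.
apply: cvg_trans h2; apply: near_eq_cvg; move: fE; apply: filterS => t ->.
by rewrite /= -expr2.
Qed.


Ltac fld := field; repeat (apply/andP; split); assumption.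

Lemma alg1 (R : realFieldType) (E2 VK1 w u T0s T0 c ct Cxi th sE sV s0 sw su : R) :
  E2 = sE^+2 -> VK1 = sV^+2 -> w = sw^+2 -> u = su^+2 -> T0s = su*T0 ->
  sV != 0 -> c != 0 -> sw != 0 -> (1-ct) != 0 -> th != 0 -> Cxi != 0 ->
  (E2 * VK1) * (u * (s0/sV/(c*sw) + T0*ct/(1-ct))^+2) * ((Cxi/th)^+2 * c^+2 * w)
   / (Cxi/th)^+2 = (su*sE*s0 + T0s*c*(sw*sE*sV) * ct/(1-ct))^+2.
Proof. move=> -> -> -> -> -> *; fld. Qed.

Lemma alg3 (R : realFieldType) (E2 VK1 w c1 T0s ts c ct Cxi th sE sV sw : R) :
  E2 = sE^+2 -> VK1 = sV^+2 -> w = sw^+2 -> c1 * T0s = ts ->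
  ct != 0 -> ct - 1 != 0 -> 1 - ct != 0 -> th != 0 -> Cxi != 0 ->
  E2 * VK1 * (ts^+2 * (1 - ct^-1)^-2) * ((Cxi/th)^+2 * c^+2 * w) / (Cxi/th)^+2
  = (-(T0s*c*(sw*sE*sV)*ct*c1/(1-ct)))^+2.
Proof. move=> -> -> -> <- *; fld. Qed.

Lemma alg2 (R : realFieldType) (E2 VK1 w c lC Cxi th sE sV sw : R) :
  E2 = sE^+2 -> VK1 = sV^+2 -> w = sw^+2 -> lC != 0 -> th != 0 -> Cxi != 0 ->
  E2 * VK1 * lC ^- 2 * ((Cxi/th)^+2 * c^+2 * w) / (Cxi/th)^+2
  = ((1 * c * (sw*sE*sV)) / lC)^+2.
Proof. move=> -> -> -> *; fld. Qed.

Lemma ratio1 (R : realFieldType) (Cxi th t a B ct c1 y k : R) :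
  t != 0 -> th != 0 -> Cxi != 0 -> k != 0 -> 1-ct != 0 ->
  (Cxi/(th*t))^+2 * (a + B*(ct*(1 - c1*y)/(1-ct)))^+2 / (k * t^-2)
  = ((a + B*ct/(1-ct)) + (-(B*ct*c1/(1-ct)))*y)^+2/(k/(Cxi/th)^+2).
Proof. by move=> *; fld. Qed.

Lemma ratio3 (R : realFieldType) (Cxi th t a B ct c1 y k tp : R) :
  t != 0 -> th != 0 -> Cxi != 0 -> k != 0 -> 1-ct != 0 -> y != 0 ->
  tp * t^+2 = y^+2 ->
  (Cxi/(th*t))^+2 * (a + B*(ct*(1 - c1*y)/(1-ct)))^+2 / (k * tp)
  = ((-(B*ct*c1/(1-ct))) + (a + B*ct/(1-ct)) * y^-1)^+2/(k/(Cxi/th)^+2).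
Proof.
move=> t0 th0 C0 k0 c0 y0 H.
have -> : tp = y^+2 / t^+2 by rewrite -H; field.
by fld.
Qed.

Lemma ratio2 (R : realFieldType) (Cxi th t a B lc l lC k : R) :
  t != 0 -> th != 0 -> Cxi != 0 -> k != 0 -> l != 0 -> lC != 0 ->
  (Cxi/(th*t))^+2 * (a + B*((lc + l)/lC))^+2 / (k * (t^-2 * (-l)^+2))
  = (B/lC + (a + B*lc/lC) * l^-1)^+2/(k/(Cxi/th)^+2).
Proof. by move=> *; fld. Qed.

Section Asym.
Variables (R : realType) (d : nat) (p C TOL0 theta Cxi V0 E2 VK1 : R).
Hypotheses (hp : 0 < p) (hC0 : 0 < C) (hC1 : C < 1) (hT0 : 0 < TOL0)
  (hth0 : 0 < theta) (hth1 : theta < 1) (hCxi : 0 < Cxi) (hV0 : 0 < V0)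
  (hE2 : 0 < E2) (hVK : 0 < VK1).

Lemma pow_sq (x : R) : 0 < x -> x `^ (- dp d p) * x ^+ 2 = (x `^ sexp d p) ^+ 2.
Proof.
move=> x0; rewrite -powR_mulrn ?(ltW x0)// -powRD; last by rewrite (gt_eqF x0) implybT.
rewrite expr2 -powRD; last by rewrite (gt_eqF x0) implybT.
congr (x `^ _); rewrite /dp /sexp; field; exact: lt0r_neq0.
Qed.

Lemma sqrt_pow (x : R) : 0 < x -> Num.sqrt (x `^ (- dp d p)) * x = x `^ sexp d p.
Proof.
move=> x0; rewrite -powR12_sqrt ?powR_ge0// -powRrM.
rewrite -{2}(powRr1 (ltW x0)) -powRD; last by rewrite (gt_eqF x0) implybT.
congr (x `^ _); rewrite /dp /sexp; field; exact: lt0r_neq0.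
Qed.

Let c := C^-1 - 1.
Let w := 1 + C `^ dp d p.
Let s := sexp d p.

Lemma c_gt0 : 0 < c.
Proof. by rewrite /c subr_gt0 invf_gt1. Qed.

Lemma w_gt0 : 0 < w.
Proof. by rewrite /w ltr_wpDr ?powR_ge0. Qed.

Lemma b_eq : Num.sqrt (Wlev d p C TOL0 E2 1 * Vlev C TOL0 V0 VK1 1) * C `^ (- sexp d p)
  = TOL0 `^ s * c * (Num.sqrt w * Num.sqrt E2 * Num.sqrt VK1).
Proof.
rewrite /Wlev /Vlev /= /TOLl expr1.
have CT0 : 0 < C * TOL0 by rewrite mulr_gt0.
have -> : (C * TOL0) `^ (- dp d p) * (1 + C `^ dp d p) * E2 *
   ((C * TOL0) ^+ 2 * (C^-1 - 1) ^+ 2 * VK1) =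
   ((C * TOL0) `^ (- dp d p) * (C * TOL0) ^+ 2) * c ^+ 2 * (w * (E2 * VK1)).
  by rewrite /c /w; ring.
rewrite pow_sq // -exprMn sqrtrM ?sqr_ge0 // sqrtr_sqr ger0_norm; last first.
  by apply: mulr_ge0; [exact: powR_ge0| exact: ltW c_gt0].
rewrite sqrtrM ?(ltW w_gt0) // sqrtrM ?(ltW hE2) //.
rewrite powRM ?(ltW hC0) ?(ltW hT0) // powRN /s.
have : C `^ sexp d p != 0 by rewrite gt_eqF ?powR_gt0.
move=> h; field; by [].
Qed.

Lemma CsL (t : R) : 0 < t ->
  C `^ (s * Lreal C TOL0 theta t) = ((1 - theta) / TOL0) `^ s * t `^ s.
Proof.
move=> t0.
have x0 : 0 < (1 - theta) * t / TOL0 by rewrite divr_gt0 // mulr_gt0 // subr_gt0.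
have lC : ln C != 0 by rewrite lt_eqF // ln_lt0 // hC0 hC1.
rewrite {1}/powR (gt_eqF hC0) /Lreal -mulrA divfK //.
have -> : expR (s * ln ((1 - theta) * t / TOL0)) = ((1 - theta) * t / TOL0) `^ s.
  by rewrite /powR gt_eqF.
rewrite mulrAC powRM // ?divr_ge0 ?ltW ?subr_gt0 //.
Qed.

End Asym.

Section Asym2.
Variables (R : realType) (d : nat) (p C TOL0 theta Cxi V0 E2 VK1 : R).
Hypotheses (hp : 0 < p) (hC0 : 0 < C) (hC1 : C < 1) (hT0 : 0 < TOL0)
  (hth0 : 0 < theta) (hth1 : theta < 1) (hCxi : 0 < Cxi) (hV0 : 0 < V0)
  (hE2 : 0 < E2) (hVK : 0 < VK1).

Theorem asym : mlmc_asymptotics d p C TOL0 theta Cxi V0 E2 VK1.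
Proof.
rewrite /mlmc_asymptotics.
set s := sexp d p.
set c := C^-1 - 1.
set w := 1 + C `^ dp d p.
set a := Num.sqrt (Wlev d p C TOL0 E2 0 * Vlev C TOL0 V0 VK1 0).
set B := TOL0 `^ s * c * (Num.sqrt w * Num.sqrt E2 * Num.sqrt VK1).
set k := Kconst d p C TOL0 theta Cxi V0 E2 VK1.
set c1 := ((1 - theta) / TOL0) `^ s.
have c0 : 0 < c by rewrite /c subr_gt0 invf_gt1.
have w0 : 0 < w by rewrite /w ltr_wpDr ?powR_ge0.
have B0 : 0 < B by rewrite /B !mulr_gt0 ?powR_gt0 ?sqrtr_gt0.
have c10 : 0 < c1 by rewrite /c1 powR_gt0 // divr_gt0 // subr_gt0.
have a0 : 0 < a by rewrite /a /Wlev /Vlev /= sqrtr_gt0 !mulr_gt0 ?powR_gt0.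
have aE : a = Num.sqrt (TOL0 `^ (- dp d p)) * Num.sqrt E2 * Num.sqrt V0.
  by rewrite /a /Wlev /Vlev /= !sqrtrM ?mulr_ge0 ?powR_ge0 ?ltW.
have Wdef t : 0 < t -> W_MLMC d p C TOL0 theta Cxi V0 E2 VK1 t =
    (Cxi / (theta * t)) ^+ 2 * (a + B * geom_sum d p C (Lreal C TOL0 theta t)) ^+ 2.
  by move=> t0; rewrite /W_MLMC /sum_sqrtWV b_eq.
have th0 : theta != 0 by rewrite gt_eqF.
have Cx0 : Cxi != 0 by rewrite gt_eqF.
have lC : ln C < 0 by rewrite ln_lt0 // hC0 hC1.
have E2E : E2 = Num.sqrt E2 ^+ 2 by rewrite sqr_sqrtr // ltW.
have VKE : VK1 = Num.sqrt VK1 ^+ 2 by rewrite sqr_sqrtr // ltW.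
have wE : w = Num.sqrt w ^+ 2 by rewrite sqr_sqrtr // ltW.
have sV0 : Num.sqrt VK1 != 0 by rewrite gt_eqF // sqrtr_gt0.
have sw0 : Num.sqrt w != 0 by rewrite gt_eqF // sqrtr_gt0.
have [hlt|hgt|heq] := ltgtP (d%:R : R) (2 * p).
-
  have s0 : 0 < s by rewrite /s /sexp subr_gt0 ltr_pdivrMr ?mulr_gt0 // mul1r.
  have ct1 : C `^ s < 1 by rewrite /powR gt_eqF // expR_lt1 pmulr_rlt0.
  have ct0 : 1 - C `^ s != 0 by rewrite gt_eqF // subr_gt0.
  have gaE : k / (Cxi / theta) ^+ 2 = (a + B * C `^ s / (1 - C `^ s)) ^+ 2.
    rewrite /k /Kconst /K3 /K4 hlt /K5 aE /B.
    rewrite sqrtrM ?(ltW hV0) // sqrtrV ?(ltW hVK) //.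
    apply: alg1 => //; first by rewrite sqr_sqrtr // powR_ge0.
      by rewrite sqrt_pow.
    by rewrite gt_eqF.
  have al0 : 0 < a + B * C `^ s / (1 - C `^ s).
    apply: addr_gt0 => //; apply: divr_gt0; [exact: mulr_gt0 B0 (powR_gt0 _ hC0)| by rewrite subr_gt0].
  have gan0 : k / (Cxi / theta) ^+ 2 != 0 by rewrite gaE sqrf_eq0 gt_eqF.
  have k0 : k != 0 by apply: contraNneq gan0 => ->; rewrite mul0r.
  apply: (@ratio_cvg _ _ (fun t => t `^ s) (a + B * C `^ s / (1 - C `^ s))
     (-(B * C `^ s * c1 / (1 - C `^ s))) (k / (Cxi / theta) ^+ 2)).
  + exact: gan0.
  + exact: gaE.
  + exact: powR_cvg0.
  + near=> t.
    have t0 : 0 < t by near: t; exact: nbhs_right_gt.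
    rewrite Wdef // /geom_sum ifN; last by rewrite lt_eqF.
    rewrite CsL // /rate hlt.
    by apply: ratio1 => //; rewrite gt_eqF.
-
  have s0 : s < 0 by rewrite /s /sexp subr_lt0 ltr_pdivlMr ?mulr_gt0 // mul1r.
  have ct1 : 1 < C `^ s by rewrite /powR gt_eqF // expR_gt1 nmulr_rgt0.
  have ct0 : 1 - C `^ s != 0 by rewrite lt_eqF // subr_lt0.
  have ctn0 : C `^ s != 0 by rewrite gt_eqF // powR_gt0.
  have ct10 : C `^ s - 1 != 0 by rewrite gt_eqF // subr_gt0.
  have nlt : (d%:R < 2 * p) = false by rewrite ltNge ltW.
  have neq : (d%:R == 2 * p) = false by rewrite gt_eqF.
  set al := -(B * C `^ s * c1 / (1 - C `^ s)).
  have al0 : al != 0.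
    rewrite /al oppr_eq0 mulf_neq0 ?invr_eq0 // mulf_neq0 ?gt_eqF //.
    by rewrite mulr_gt0 // powR_gt0.
  have gaE : k / (Cxi / theta) ^+ 2 = al ^+ 2.
    have e1 : (1 - theta) `^ (2 - dp d p) = ((1 - theta) `^ s) ^+ 2.
      have th1 : 1 - theta != 0 by rewrite gt_eqF // subr_gt0.
      rewrite expr2 -powRD; last by rewrite th1 implybT.
      by congr (_ `^ _); rewrite /s /sexp /dp; field; rewrite gt_eqF.
    have e2 : C `^ (d%:R / (2 * p) - 1) = (C `^ s)^-1.
      by rewrite -powRN; congr (_ `^ _); rewrite /s /sexp opprB.
    rewrite /k /Kconst /K3 /K4 nlt neq /K5 e1 e2 /al /B.
    apply: alg3 => //.
    by rewrite /c1 -powRM ?divr_ge0 ?ltW ?subr_gt0 // divfK // gt_eqF.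
  have gan0 : k / (Cxi / theta) ^+ 2 != 0 by rewrite gaE sqrf_eq0.
  have k0 : k != 0 by apply: contraNneq gan0 => ->; rewrite mul0r.
  apply: (@ratio_cvg _ _ (fun t => t `^ (- s)) al
     (a + B * C `^ s / (1 - C `^ s)) (k / (Cxi / theta) ^+ 2)).
  + exact: gan0.
  + exact: gaE.
  + by apply: powR_cvg0; rewrite oppr_gt0.
  + near=> t.
    have t0 : 0 < t by near: t; exact: nbhs_right_gt.
    rewrite Wdef // /geom_sum neq CsL // /rate nlt neq [t `^ (- s)]powRN.
    apply: ratio3 => //; first by rewrite gt_eqF // powR_gt0.
    exact: pow_sq.
-
  have s0 : s = 0.
    by rewrite /s /sexp heq divff ?subrr // gt_eqF // mulr_gt0.
  have BE : B = 1 * c * (Num.sqrt w * Num.sqrt E2 * Num.sqrt VK1).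
    by rewrite /B s0 powRr0.
  have nlt : (d%:R < 2 * p) = false by rewrite heq ltxx.
  have neq : (d%:R == 2 * p) = true by rewrite heq eqxx.
  have lCn0 : ln C != 0 by rewrite lt_eqF.
  set lc := ln ((1 - theta) / TOL0).
  have gaE : k / (Cxi / theta) ^+ 2 = (B / ln C) ^+ 2.
    rewrite /k /Kconst /K3 /K4 nlt neq /K5 BE.
    by apply: alg2.
  have gan0 : k / (Cxi / theta) ^+ 2 != 0.
    by rewrite gaE sqrf_eq0 mulf_neq0 ?invr_eq0 // gt_eqF.
  have k0 : k != 0 by apply: contraNneq gan0 => ->; rewrite mul0r.
  apply: (@ratio_cvg _ _ (fun t => (ln t)^-1) (B / ln C)
     (a + B * lc / ln C) (k / (Cxi / theta) ^+ 2)).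
  + exact: gan0.
  + exact: gaE.
  + have H : \forall t \near 0^'+, ln t < 0 :> R.
      near=> t; apply: ln_lt0; apply/andP; split.
        by near: t; exact: nbhs_right_gt.
      by near: t; exact: nbhs_right_lt.
    exact: ((ltr0_cvgV0 H).2 (@lnNy R)).
  + near=> t.
    have t0 : 0 < t by near: t; exact: nbhs_right_gt.
    have t1 : t < 1 by near: t; exact: nbhs_right_lt.
    rewrite Wdef // /geom_sum neq /Lreal [(1 - theta) * t / TOL0]mulrAC.
    rewrite lnM ?posrE ?divr_gt0 ?subr_gt0 //.
    rewrite /rate nlt neq lnV ?posrE //.
    apply: ratio2 => //.
    by rewrite lt_eqF // ln_lt0 // t0 t1.
Unshelve. all: by end_near.
Qed.
End Asym2.

Section Meas.
Local Open Scope ereal_scope.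
Context {R : realType} {dX : measure_display} {X : measurableType dX}
  {dT : measure_display} {T : measurableType dT}.
Variables (mu : {measure set X -> \bar R}) (smu : sigma_finite setT mu)
  (P : probability T R) (D : set X) (mD : measurable D).

Let mu' : {sigma_finite_measure set X -> \bar R} :=
  HB.pack_for (SigmaFiniteMeasure.type X R) (Measure.sort mu)
    (isSFinite.Build _ _ _ (Measure.sort mu) (sfinite_measure_sigma_finite smu))
    (isSigmaFinite.Build _ _ _ (Measure.sort mu) smu).
Let mu'E : mu' = mu :> (set X -> \bar R). Proof. by []. Qed.

Lemma fub (h : X -> T -> R) : (forall x w, (0 <= h x w)%R) ->
  measurable_fun setT (fun z : X * T => h z.1 z.2) ->
  measurable_fun [set: T] (fun w : T => (\int[mu]_(x in D) (h x w)%:E : \bar R)) /\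
  \int[mu]_(x in D) \int[P]_w (h x w)%:E = \int[P]_w \int[mu]_(x in D) (h x w)%:E.
Proof.
move=> h0 mh.
pose G (z : X * T) := ((\1_D z.1 * h z.1 z.2)%R)%:E.
have mG : measurable_fun setT G.
  apply/measurable_EFinP; apply: measurable_funM => //.
  apply: measurableT_comp => //; exact: measurable_indic.
have G0 z : 0 <= G z by rewrite lee_fin mulr_ge0.
have E1 w : \int[mu]_(x in D) (h x w)%:E = \int[mu]_x G (x, w).
  rewrite integral_mkcond; apply: eq_integral => x _.
  rewrite /G /patch /= indicE; case: ifP => _; by rewrite ?mul1r ?mul0r.
have E2 : \int[mu]_(x in D) \int[P]_w (h x w)%:E = \int[mu]_x \int[P]_w G (x, w).
  rewrite integral_mkcond; apply: eq_integral => x _.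
  rewrite /G /patch /= indicE; case: ifP => _.
    by apply: eq_integral => w _; rewrite mul1r.
  by rewrite (eq_integral (fun=> 0)) ?integral0 // => w _; rewrite mul0r.
split.
  rewrite (funext E1).
  exact: (@measurable_fun_fubini_tonelli_G _ _ _ _ _ mu' G mG G0).
by rewrite E2 (@fubini_tonelli _ _ _ _ _ mu' P G mG G0) (funext E1).
Qed.
End Meas.

Lemma mul_powR (R : realType) (x e : R) : 0 <= x -> e + 1 != 0 ->
  x * x `^ e = x `^ (e + 1).
Proof.
move=> x0 e1; have [->|xn0] := eqVneq x 0; first by rewrite mul0r powR0.
rewrite powRD; last by rewrite xn0 implybT.
by rewrite powRr1 // mulrC.
Qed.

Section ProbL.
Local Open Scope ereal_scope.
Context {R : realType} {dT : measure_display} {T : measurableType dT}.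
Variable P : probability T R.

Lemma Ee_scale (Y : T -> \bar R) (c : R) : (0 <= c)%R ->
  measurable_fun [set: T] Y -> (forall w, 0 <= Y w) ->
  Ee P (fun w => c%:E * Y w) = c%:E * Ee P Y.
Proof. by move=> c0 mY Y0; rewrite /Ee ge0_integralZl_EFin. Qed.

Lemma Vare_ge0 (Y : T -> \bar R) : 0 <= Vare P Y.
Proof. by apply: integral_ge0 => w _; exact: sqre_ge0. Qed.

Lemma Vare_scale (Y : T -> \bar R) (c : R) : (0 <= c)%R ->
  measurable_fun [set: T] Y -> (forall w, 0 <= Y w) -> Ee P Y \is a fin_num ->
  Vare P (fun w => c%:E * Y w) = (c ^+ 2)%:E * Vare P Y.
Proof.
move=> c0 mY Y0 fY; rewrite /Vare Ee_scale //.
rewrite -(fineK fY); set r := fine (Ee P Y).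
rewrite -ge0_integralZl_EFin ?sqr_ge0 //; last 2 first.
- by move=> w _; exact: sqre_ge0.
- apply: (@emeasurable_funM _ _ _ _ (fun w => Y w - r%:E) (fun w => Y w - r%:E));
    by apply: emeasurable_funB.
apply: eq_integral => w _.
have [->|cn0] := eqVneq c 0%R.
  have -> : ((0:R) ^+ 2)%:E = 0 by rewrite expr0n.
  by rewrite !mul0e subee // expe2 mule0.
have cp : (0 < c)%R by rewrite lt_neqAle eq_sym cn0.
move: (Y0 w); case: (Y w) => [y| |] // _.
- by rewrite -!EFinM -!EFinB !expe2 -!EFinM; congr EFin; ring.
- rewrite gt0_muley ?lte_fin // (_ : +oo - r%:E = +oo) //.
  by rewrite !expe2 mulyy gt0_muley // lte_fin exprn_gt0.
Qed.
End ProbL.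

Section CaseI.
Context {R : realType} {dX : measure_display} {X : measurableType dX}
  {dT : measure_display} {T : measurableType dT}.
Variables (mu : {measure set X -> \bar R}) (smu : sigma_finite setT mu)
  (P : probability T R) (D : set X) (mD : measurable D)
  (rho : X -> T -> R)
  (mrho : measurable_fun setT (fun z : X * T => rho z.1 z.2))
  (rho0 : forall x w, 0 <= rho x w).

Lemma case_i (d : nat) (p : R) : (0 < d)%N -> 0 < p ->
  (LqP_norm mu D P rho (qexp d p) < +oo)%E ->
  let f := f_full mu D P rho d p in
  let E2 := fine (Ee P (K2 mu D f d)) in
  let VK1 := Vare P (K1 mu D rho f p) in
  (0 < VK1 < +oo)%E ->
  0 < E2 /\ 0 < fine VK1 /\ K3 E2 (fine VK1) =
      fine (LqP_norm mu D P rho (qexp d p)) `^ (d%:R / p)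
      * coef_var P (fun w => poweR (LqD_norm mu D rho (qexp d p) w) (qexp d p)) ^+ 2.
Proof.
move=> d0 p0 hL f E2 VK1 hV.
set q := qexp d p.
have dR : (0 < d%:R :> R) by rewrite ltr0n.
have q0 : 0 < q by rewrite /q /qexp divr_gt0 // addr_gt0.
have qn0 : q != 0 by rewrite gt_eqF.
have pd0 : p + d%:R != 0 by rewrite gt_eqF // addr_gt0.
have pn0 : p != 0 by rewrite gt_eqF.
pose g x w := rho x w `^ q.
have mg : measurable_fun setT (fun z : X * T => g z.1 z.2).
  exact: (measurableT_comp (measurable_powR q) mrho).
have g0 x w : 0 <= g x w by exact: powR_ge0.
have [mY PY] := fub mu smu P D mD g g0 mg.
set Y := (fun w => (\int[mu]_(x in D) (g x w)%:E)%E) in mY PY.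
set I := (\int[mu]_(x in D) \int[P]_w (g x w)%:E)%E in PY.
have YEq : Y = (fun w => (\int[mu]_(x in D) (g x w)%:E)%E) by [].
have IEq : I = (\int[mu]_(x in D) \int[P]_w (g x w)%:E)%E by [].
clearbody Y I.
have Y0 w : (0 <= Y w)%E by rewrite YEq; apply: integral_ge0 => x _; exact: g0.
have IE1 : (\int[mu]_(x in D) \int[P]_w ((`|rho x w| `^ q)%:E) = I)%E.
  rewrite IEq; apply: eq_integral => x _.
  by apply: eq_integral => w _; rewrite ger0_norm.
have LqPE : LqP_norm mu D P rho q = poweR I q^-1.
  by rewrite /LqP_norm IE1.
have I0 : (0 <= I)%E.
  rewrite IEq; apply: integral_ge0 => x _; apply: integral_ge0 => w _; exact: g0.
have Ifin : I \is a fin_num.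
  rewrite ge0_fin_numE //; apply: (@lty_poweRy _ _ q^-1); first by rewrite invr_eq0.
  by rewrite -LqPE.
set A := fine I.
have IE : I = A%:E by rewrite fineK.
have A0 : 0 <= A by rewrite fine_ge0.
have fE x w : f x w = A `^ (- p^-1) * rho x w `^ (- (p + d%:R)^-1).
  by rewrite /f /f_full /A IEq.
have K2E w : K2 mu D f d w = ((A `^ (d%:R / p))%:E * Y w)%E.
  rewrite /K2 YEq -ge0_integralZl_EFin; first last.
  - exact: powR_ge0.
  - apply/measurable_EFinP; exact: measurable_funS (measurable_fun_pair1 w mg).
  - by move=> x _; rewrite lee_fin; exact: g0.
  - exact: mD.
  apply: eq_integral => x _; congr EFin.
  rewrite fE powRM ?powR_ge0 // -!powRrM /g /q /qexp; congr (_ * _); congr (_ `^ _);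
    by field.
have K1E w : K1 mu D rho f p w = ((A^-1)%:E * Y w)%E.
  rewrite /K1 YEq -ge0_integralZl_EFin; first last.
  - by rewrite invr_ge0.
  - apply/measurable_EFinP; exact: measurable_funS (measurable_fun_pair1 w mg).
  - by move=> x _; rewrite lee_fin; exact: g0.
  - exact: mD.
  apply: eq_integral => x _; congr EFin.
  rewrite fE powRM ?powR_ge0 // -!powRrM.
  have -> : - p^-1 * p = -1 by field.
  rewrite powR_inv1 // mulrCA mul_powR //.
    by rewrite /g /q /qexp; congr (_ * (_ `^ _)); field.
  have -> : - (p + d%:R)^-1 * p + 1 = q by rewrite /q /qexp; field.
  exact: qn0.
have EY : Ee P Y = I by rewrite /Ee; exact: esym PY.
have EK2 : Ee P (K2 mu D f d) = ((A `^ (d%:R / p) * A)%:E)%E.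
  rewrite (funext K2E) Ee_scale.
  - by rewrite EY IE.
  - exact: powR_ge0.
  - exact: mY.
  - exact: Y0.
have VK1E : VK1 = (((A^-1) ^+ 2)%:E * Vare P Y)%E.
  rewrite /VK1 (funext K1E) Vare_scale.
  - by [].
  - by rewrite invr_ge0.
  - exact: mY.
  - exact: Y0.
  - by rewrite EY IE.
have V0 := Vare_ge0 P Y.
have An0 : A != 0.
  apply/negP => /eqP A0'; move: hV; rewrite VK1E A0'.
  have -> : (((0:R)^-1) ^+ 2)%:E = 0%E by rewrite invr0 expr0n.
  by rewrite mul0e ltxx.
have Ap : 0 < A by rewrite lt_neqAle eq_sym An0 A0.
have Vfin : Vare P Y \is a fin_num.
  have : (0 < ((A^-1)^+2)%:E * Vare P Y < +oo)%E by rewrite -VK1E.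
  move: V0; case: (Vare P Y) => [v| |] // _ /andP[_].
  by rewrite gt0_muley ?ltxx // lte_fin exprn_gt0 // invr_gt0.
set v := fine (Vare P Y).
have VE : Vare P Y = v%:E by rewrite fineK.
have v0 : 0 <= v by rewrite fine_ge0.
have fVK : fine VK1 = A^-1 ^+ 2 * v by rewrite VK1E VE.
have E2E : E2 = A `^ (d%:R/p) * A by rewrite /E2 EK2.
have LqE : fine (LqP_norm mu D P rho q) = A `^ q^-1 by rewrite LqPE IE.
have ZE : (fun w => poweR (LqD_norm mu D rho q w) q) = Y.
  apply/funext => w; rewrite /LqD_norm.
  have -> : (\int[mu]_(x in D) ((`|rho x w| `^ q)%:E))%E = Y w.
    by rewrite YEq; apply: eq_integral => x _; rewrite ger0_norm.
  by rewrite -poweRrM mulVf // poweRe1.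
have cvE : coef_var P Y = Num.sqrt v / A by rewrite /coef_var EY IE.
split; [|split].
- by rewrite E2E; apply: mulr_gt0 => //; exact: powR_gt0.
- exact: fine_gt0 hV.
- rewrite /K3 E2E fVK LqE ZE cvE -powRrM.
  have -> : q^-1 * (d%:R / p) = 1 + d%:R / p.
    by rewrite /q /qexp; field; rewrite pn0 pd0 gt_eqF.
  rewrite powRD; last by rewrite An0 implybT.
  rewrite powRr1 // exprMn sqr_sqrtr //.
  by field.
Qed.
End CaseI.

Section CaseII.
Context {R : realType} {dX : measure_display} {X : measurableType dX}
  {dT : measure_display} {T : measurableType dT}.
Variables (mu : {measure set X -> \bar R}) (smu : sigma_finite setT mu)
  (P : probability T R) (D : set X) (mD : measurable D)
  (hmuD : (0 < mu D < +oo)%E)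
  (rho : X -> T -> R)
  (mrho : measurable_fun setT (fun z : X * T => rho z.1 z.2))
  (rho0 : forall x w, 0 <= rho x w).

Lemma case_ii (d : nat) (p : R) : (0 < d)%N -> 0 < p ->
  (LqO_norm P (L1D_norm mu D rho) (qexp d p) < +oo)%E ->
  let f := f_unif mu D P rho d p in
  let E2 := fine (Ee P (K2 mu D f d)) in
  let VK1 := Vare P (K1 mu D rho f p) in
  (0 < VK1 < +oo)%E ->
  0 < E2 /\ 0 < fine VK1 /\ K3 E2 (fine VK1) =
      fine (mu D)
      * fine (LqO_norm P (L1D_norm mu D rho) (qexp d p)) `^ (d%:R / p)
      * coef_var P (fun w => poweR (L1D_norm mu D rho w) (qexp d p)) ^+ 2.
Proof.
move=> d0 p0 hL f E2 VK1 hV.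
set q := qexp d p.
have dR : (0 < d%:R :> R) by rewrite ltr0n.
have q0 : 0 < q by rewrite /q /qexp divr_gt0 // addr_gt0.
have qn0 : q != 0 by rewrite gt_eqF.
have pd0 : p + d%:R != 0 by rewrite gt_eqF // addr_gt0.
have pn0 : p != 0 by rewrite gt_eqF.
have [mB _] := fub mu smu P D mD rho rho0 mrho.
set Bw := (fun w => (\int[mu]_(x in D) (rho x w)%:E)%E) in mB.
have BwEq : Bw = (fun w => (\int[mu]_(x in D) (rho x w)%:E)%E) by [].
clearbody Bw.
have Bw0 w : (0 <= Bw w)%E by rewrite BwEq; apply: integral_ge0 => x _; rewrite lee_fin; exact: rho0.
have L1E : L1D_norm mu D rho = Bw.
  apply/funext => w; rewrite BwEq /L1D_norm; apply: eq_integral => x _.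
  by rewrite ger0_norm.
set Z := (fun w => poweR (Bw w) q).
have ZEq : Z = (fun w => poweR (Bw w) q) by [].
clearbody Z.
have mZ : measurable_fun [set: T] Z.
  by rewrite ZEq; exact: (measurableT_comp (measurable_poweR q) mB).
have Z0 w : (0 <= Z w)%E by rewrite ZEq; exact: poweR_ge0.
set J := (\int[P]_w Z w)%E.
have JEq : J = (\int[P]_w Z w)%E by [].
clearbody J.
have LqOE : LqO_norm P (L1D_norm mu D rho) q = poweR J q^-1.
  rewrite /LqO_norm L1E JEq ZEq; congr poweR.
  by apply: eq_integral => w _; rewrite gee0_abs.
have J0 : (0 <= J)%E by rewrite JEq; apply: integral_ge0 => w _; exact: Z0.
have Jfin : J \is a fin_num.
  rewrite ge0_fin_numE //; apply: (@lty_poweRy _ _ q^-1); first by rewrite invr_eq0.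
  by rewrite -LqOE.
set G := fine J.
have JE : J = G%:E by rewrite fineK.
have G0 : 0 <= G by rewrite fine_ge0.
have Zint : P.-integrable setT Z.
  apply/integrableP; split => //.
  rewrite (eq_integral Z); last by move=> w _; rewrite gee0_abs.
  by rewrite -JEq JE ltry.
have ae := integrable_ae measurableT Zint.
set Zf := (fun w => ((fine (Bw w)) `^ q)%:E).
have mZf : measurable_fun [set: T] Zf.
  apply/measurable_EFinP; apply: (measurableT_comp (measurable_powR q)).
  exact: (measurableT_comp (fine_measurable measurableT) mB).
have Zf0 w : (0 <= Zf w)%E by rewrite lee_fin; exact: powR_ge0.
have ZfZ : ae_eq P setT Zf Z.
  apply: filterS ae => w Hw _; move: (Hw Logic.I) (Bw0 w).
  rewrite /Zf ZEq; case: (Bw w) => [b| |] //=.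
  by rewrite (negbTE qn0).
have EZ : Ee P Zf = J.
  by rewrite /Ee JEq; apply: ae_eq_integral.
have EZZ : Ee P Zf = Ee P Z by rewrite EZ JEq.
have VZ : Vare P Zf = Vare P Z.
  rewrite /Vare EZZ; apply: ae_eq_integral => //.
  - apply: (@emeasurable_funM _ _ _ _ (fun w => (Zf w - Ee P Z)%E) (fun w => (Zf w - Ee P Z)%E));
      by apply: emeasurable_funB.
  - apply: (@emeasurable_funM _ _ _ _ (fun w => (Z w - Ee P Z)%E) (fun w => (Z w - Ee P Z)%E));
      by apply: emeasurable_funB.
  - by apply: filterS ZfZ => w h1 h2; rewrite h1.
set m := fine (mu D).
have muE : mu D = m%:E.
  by rewrite fineK // ge0_fin_numE ?(ltW (andP hmuD).1) // (andP hmuD).2.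
have m0 : 0 < m by exact: fine_gt0 hmuD.
have fE x w : f x w = (fine (Bw w)) `^ (- (p + d%:R)^-1) * G `^ (- p^-1).
  by rewrite /f /f_unif [G `^ _]powRN /G JEq ZEq BwEq.
have K2E w : K2 mu D f d w = ((G `^ (d%:R / p) * m)%:E * Zf w)%E.
  rewrite /K2 (eq_integral (cst ((fine (Bw w) `^ (- (p + d%:R)^-1) * G `^ (- p^-1))
    `^ (- d%:R))%:E)); last by move=> x _; rewrite fE.
  rewrite integral_cst // muE /Zf -!EFinM; congr EFin.
  rewrite powRM ?powR_ge0 // -!powRrM.
  have -> : - (p + d%:R)^-1 * - d%:R = q by rewrite /q /qexp; field.
  have -> : - p^-1 * - d%:R = d%:R / p by field.
  by rewrite -mulrA mulrC.
have K1E w : K1 mu D rho f p w = ((G^-1)%:E * Zf w)%E.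
  rewrite /K1 (eq_integral (fun x => ((fine (Bw w) `^ (- (p + d%:R)^-1) * G `^ (- p^-1))
    `^ p)%:E * (rho x w)%:E)%E); last by move=> x _; rewrite fE -EFinM mulrC.
  rewrite ge0_integralZl_EFin; first last.
  - exact: powR_ge0.
  - apply/measurable_EFinP; exact: measurable_funS (measurable_fun_pair1 w mrho).
  - by move=> x _; rewrite lee_fin; exact: rho0.
  - exact: mD.
  have -> : (\int[mu]_(x in D) (rho x w)%:E)%E = Bw w by rewrite BwEq.
  rewrite powRM ?powR_ge0 // -!powRrM.
  have -> : - p^-1 * p = -1 by field.
  rewrite powR_inv1 // /Zf.
  move: (Bw0 w); case: (Bw w) => [b| |] //= b0.
  - rewrite -!EFinM; congr EFin; rewrite mulrAC mulrC [b `^ _ * b]mulrC; congr (_ * _).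
    rewrite mul_powR //; first by congr (_ `^ _); rewrite /q /qexp; field.
    have -> : - (p + d%:R)^-1 * p + 1 = q by rewrite /q /qexp; field.
    exact: qn0.
  - rewrite powR0; last by rewrite mulf_neq0 // oppr_eq0 invr_eq0.
    by rewrite powR0 // mul0r mul0e mule0.
have EK2 : Ee P (K2 mu D f d) = ((G `^ (d%:R / p) * m * G)%:E)%E.
  rewrite (funext K2E) Ee_scale.
  - by rewrite EZ JE.
  - by rewrite mulr_ge0 ?powR_ge0 // ltW.
  - exact: mZf.
  - exact: Zf0.
have VK1E : VK1 = (((G^-1) ^+ 2)%:E * Vare P Z)%E.
  rewrite /VK1 (funext K1E) Vare_scale.
  - by rewrite VZ.
  - by rewrite invr_ge0.
  - exact: mZf.
  - exact: Zf0.
  - by rewrite EZ JE.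
have V0 := Vare_ge0 P Z.
have Gn0 : G != 0.
  apply/negP => /eqP G0'; move: hV; rewrite VK1E G0'.
  have -> : (((0:R)^-1) ^+ 2)%:E = 0%E by rewrite invr0 expr0n.
  by rewrite mul0e ltxx.
have Gp : 0 < G by rewrite lt_neqAle eq_sym Gn0 G0.
have Vfin : Vare P Z \is a fin_num.
  have : (0 < ((G^-1)^+2)%:E * Vare P Z < +oo)%E by rewrite -VK1E.
  move: V0; case: (Vare P Z) => [v| |] // _ /andP[_].
  by rewrite gt0_muley ?ltxx // lte_fin exprn_gt0 // invr_gt0.
set v := fine (Vare P Z).
have VE : Vare P Z = v%:E by rewrite fineK.
have v0 : 0 <= v by rewrite fine_ge0.
have fVK : fine VK1 = G^-1 ^+ 2 * v by rewrite VK1E VE.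
have E2E : E2 = G `^ (d%:R/p) * m * G by rewrite /E2 EK2.
have LqE : fine (LqO_norm P (L1D_norm mu D rho) q) = G `^ q^-1 by rewrite LqOE JE.
have ZE : (fun w => poweR (L1D_norm mu D rho w) q) = Z by rewrite L1E ZEq.
have cvE : coef_var P Z = Num.sqrt v / G by rewrite /coef_var -EZZ EZ JE.
split; [|split].
- by rewrite E2E; apply: mulr_gt0 => //; apply: mulr_gt0 => //; exact: powR_gt0.
- exact: fine_gt0 hV.
- rewrite /K3 E2E fVK LqE ZE cvE -powRrM.
  have -> : q^-1 * (d%:R / p) = 1 + d%:R / p.
    by rewrite /q /qexp; field; rewrite pn0 pd0 gt_eqF.
  rewrite powRD; last by rewrite Gn0 implybT.
  rewrite powRr1 // exprMn sqr_sqrtr //.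
  by field.
Qed.
End CaseII.

Theorem corollary3p1 (R : realType)
  (dX : measure_display) (X : measurableType dX) (mu : {measure set X -> \bar R})
  (D : set X)
  (dT : measure_display) (T : measurableType dT) (P : probability T R)
  (rho : X -> T -> R) (d : nat) (p C TOL0 theta Cxi V0 : R) :
  measurable D -> (0 < mu D < +oo)%E -> sigma_finite setT mu ->
  measurable_fun setT (fun z : X * T => rho z.1 z.2) ->
  (forall x w, 0 <= rho x w) ->
  (0 < d)%N -> 0 < p -> 0 < C < 1 -> 0 < TOL0 -> 0 < theta < 1 -> 0 < Cxi ->
  0 < V0 ->
  (* case (i): fully adaptive meshes *)
  ((LqP_norm mu D P rho (qexp d p) < +oo)%E ->
   let f := f_full mu D P rho d p in
   let E2 := fine (Ee P (K2 mu D f d)) in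
   let VK1 := Vare P (K1 mu D rho f p) in
   (0 < VK1 < +oo)%E ->
   mlmc_asymptotics d p C TOL0 theta Cxi V0 E2 (fine VK1)
   /\ K3 E2 (fine VK1) =
      fine (LqP_norm mu D P rho (qexp d p)) `^ (d%:R / p)
      * coef_var P (fun w => poweR (LqD_norm mu D rho (qexp d p) w) (qexp d p)) ^+ 2)
  /\
  (* case (ii): adaptive selection of uniform meshes *)
  ((LqO_norm P (L1D_norm mu D rho) (qexp d p) < +oo)%E ->
   let f := f_unif mu D P rho d p in
   let E2 := fine (Ee P (K2 mu D f d)) in
   let VK1 := Vare P (K1 mu D rho f p) in
   (0 < VK1 < +oo)%E ->
   mlmc_asymptotics d p C TOL0 theta Cxi V0 E2 (fine VK1)
   /\ K3 E2 (fine VK1) =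
      fine (mu D)
      * fine (LqO_norm P (L1D_norm mu D rho) (qexp d p)) `^ (d%:R / p)
      * coef_var P (fun w => poweR (L1D_norm mu D rho w) (qexp d p)) ^+ 2).
Proof.
move=> mD hmuD smu mrho rho0 d0 p0 /andP[C0 C1] T0 /andP[th0 th1] Cxi0 V00.
split.
- move=> hL f E2 VK1 hV.
  have [E20 [VK0 K3E]] := @case_i R dX X dT T mu smu P D mD rho mrho rho0 d p d0 p0 hL hV.
  split; last exact: K3E.
  by apply: asym.
- move=> hL f E2 VK1 hV.
  have [E20 [VK0 K3E]] := @case_ii R dX X dT T mu smu P D mD hmuD rho mrho rho0 d p d0 p0 hL hV.
  split; last exact: K3E.
  by apply: asym.
Qed.
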